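(* Let $n\ge 2$. Let $\Theta\subset\mathbb{R}^{n+\binom{n}{2}}$ be the set of all pairs $(\boldsymbol{\lambda},G)$, where $\boldsymbol{\lambda}=(\lambda_1,\dots,\lambda_n)$ consists of non-zero reals with $\lambda_p\ne\pm\lambda_q$ for $p\ne q$, and $G=(g_{pq})$ is a real symmetric $n\times n$ matrix with $g_{pp}=1$, such that the following hold for $G$ and the matrix $H=(h_{pq})$ defined by $h_{pp}=1$ and $h_{pq}=\frac{2\lambda_p(\lambda_pg_{pq}-\lambda_q)}{\lambda_p^2-\lambda_q^2}$ for $p\ne q$: (i) $G$ is non-degenerate indefinite with negative index of inertia $1$, and all principal minors of $G$ of sizes $2\times2,\dots,(n-1)\times(n-1)$ are strictly positive; (ii) $\sum_{q=1}^n\sum_{r=1}^ng^{qr}h_{pq}h_{pr}<0$ for $p=1,\dots,n$, where $(g^{qr})=G^{-1}$. Then $\Theta$ is non-empty.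
   Context: (By the paper's construction, points of $\Theta$ correspond to flexible cross-polytopes in Lobachevsky space $\Lambda^n$ of the simplest type, in which all tangents of half dihedral angles at one facet stay proportional.) *)

(* Defs.v *)
From HB Require Import structures.
From mathcomp Require Import all_boot all_order all_algebra.
From mathcomp Require Import reals.
Set Implicit Arguments. Unset Strict Implicit. Unset Printing Implicit Defensive.
Import Order.TTheory GRing.Theory Num.Theory.
Local Open Scope ring_scope.

(* Negative index of inertia of a symmetric matrix (Sylvester): the number of
   negative diagonal entries in a congruence diagonalization P^T G P. *)
Definition neg_inertia_index (R : realFieldType) (n : nat) (G : 'M[R]_n) (k : nat) : Prop :=
  exists (P : 'M[R]_n) (d : 'rV[R]_n),
    P \in unitmx /\ P^T *m G *m P = diag_mx d /\ #|[set i | d 0 i < 0]| = k.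

Definition nondegenerate (R : realFieldType) (n : nat) (G : 'M[R]_n) : Prop :=
  \det G != 0.

Definition indefinite (R : realFieldType) (n : nat) (G : 'M[R]_n) : Prop :=
  (exists x : 'rV[R]_n, 0 < (x *m G *m x^T) 0 0) /\
  (exists y : 'rV[R]_n, (y *m G *m y^T) 0 0 < 0).

Definition principal_submx (R : realFieldType) (n : nat) (G : 'M[R]_n)
  (S : {set 'I_n}) : 'M[R]_#|S| :=
  \matrix_(i < #|S|, j < #|S|) G (enum_val i) (enum_val j).

Definition principal_minor (R : realFieldType) (n : nat) (G : 'M[R]_n)
  (S : {set 'I_n}) : R := \det (principal_submx G S).

Definition Hmx (R : realFieldType) (n : nat) (lam : 'I_n -> R) (G : 'M[R]_n) : 'M[R]_n :=
  \matrix_(p, q) (if p == q then 1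
                  else 2 * lam p * (lam p * G p q - lam q) / (lam p ^+ 2 - lam q ^+ 2)).

Definition in_Theta (R : realFieldType) (n : nat) (lam : 'I_n -> R) (G : 'M[R]_n) : Prop :=
  (forall p, lam p != 0) /\
  (forall p q, p != q -> lam p != lam q /\ lam p != - lam q) /\
  G^T = G /\ (forall p, G p p = 1) /\
  (nondegenerate G /\ indefinite G /\ neg_inertia_index G 1 /\
   (forall S : {set 'I_n}, (2 <= #|S| <= n.-1)%N -> 0 < principal_minor G S)) /\
  (forall p, \sum_q \sum_r (invmx G) q r * Hmx lam G p q * Hmx lam G p r < 0).

(* Main.v *)
Require Import Defs.
From HB Require Import structures.
From mathcomp Require Import all_boot all_order all_algebra.
From mathcomp Require Import reals.
From mathcomp Require Import ring lra zify.
Import Order.TTheory GRing.Theory Num.Theory.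
Local Open Scope ring_scope.
Set Implicit Arguments. Unset Strict Implicit. Unset Printing Implicit Defensive.
Lemma sum_lt (R : zmodType) m k (x : R) : (k <= m)%N ->
  \sum_(l < m) (if (l < k)%N then x else 0) = x *+ k.
Proof.
elim: m k => [|m IH] k hk.
  by move: hk; rewrite leqn0 => /eqP ->; rewrite big_ord0.
rewrite big_ord_recr /=.
case: (ltnP m k) => hmk.
  have ek : k = m.+1 by apply/eqP; rewrite eqn_leq hk hmk.
  subst k. rewrite mulrSr -(IH m (leqnn m)); congr (_ + _).
  by apply: eq_bigr => i _; rewrite ltn_ord ltnS ltnW.
by rewrite addr0 IH.
Qed.

Definition Umx (R : fieldType) m (a : R) : 'M[R]_m :=
  \matrix_(i, j) (if i == j then 1 else a).
Definition bet (R : fieldType) (a : R) (k : nat) : R := - a / (1 + (k%:R - 1) * a).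
Definition Pmx (R : fieldType) m (a : R) : 'M[R]_m :=
  \matrix_(j, k) (if j == k then 1 else if (j < k)%N then bet a k else 0).
Definition piv (R : fieldType) (a : R) (k : nat) : R := 1 + k%:R * a * bet a k.

Lemma sum_delta (R : fieldType) m (j : 'I_m) (F : 'I_m -> R) :
  \sum_l (if j == l then 1 else 0) * F l = F j.
Proof.
rewrite (bigD1 j) //= eqxx mul1r big1 ?addr0 // => l hl.
by rewrite eq_sym (negbTE hl) mul0r.
Qed.

Lemma colsumP (R : fieldType) m (a : R) (k : 'I_m) :
  \sum_l Pmx m a l k = 1 + k%:R * bet a k.
Proof.
have -> : \sum_l Pmx m a l k =
   \sum_l ((if k == l then 1 else 0) * 1 + (if (l < k)%N then bet a k else 0)).
  apply: eq_bigr => l _; rewrite mxE eq_sym.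
  case: eqP => [->|_]; first by rewrite ltnn; ring.
  by rewrite mul0r add0r.
rewrite big_split /= sum_delta sum_lt ?(ltnW (ltn_ord k)) //.
by rewrite mulr_natl.
Qed.

Lemma UP_entry (R : fieldType) m (a : R) (j k : 'I_m) :
  (Umx m a *m Pmx m a) j k = (1 - a) * Pmx m a j k + a * (1 + k%:R * bet a k).
Proof.
rewrite mxE.
have -> : \sum_l Umx m a j l * Pmx m a l k =
   \sum_l ((1 - a) * ((if j == l then 1 else 0) * Pmx m a l k) + a * Pmx m a l k).
  apply: eq_bigr => l _; rewrite mxE; case: eqP => _; ring.
by rewrite big_split /= -!mulr_sumr sum_delta colsumP.
Qed.

Lemma UP_zero (R : fieldType) m (a : R) (j k : 'I_m) :
  (1 + (k%:R - 1) * a != 0) -> (j < k)%N -> (Umx m a *m Pmx m a) j k = 0.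
Proof.
move=> hk hjk; rewrite UP_entry mxE.
have jk : (j == k) = false by rewrite -val_eqE /= ltn_eqF.
rewrite jk hjk /bet.
have -> : (1 - a) * (- a / (1 + (k%:R - 1) * a)) + a * (1 + k%:R * (- a / (1 + (k%:R - 1) * a)))
  = a * ((1 + (k%:R - 1) * a) / (1 + (k%:R - 1) * a)) - a * ((1 + (k%:R - 1) * a) / (1 + (k%:R - 1) * a)).
  rewrite divff //; field; done.
by rewrite subrr.
Qed.

Lemma Umx_tr (R : fieldType) m (a : R) : (Umx m a)^T = Umx m a.
Proof. by apply/matrixP => i j; rewrite !mxE eq_sym. Qed.

Lemma LDL_le (R : fieldType) m (a : R) (i k : 'I_m) :
  (forall k : 'I_m, 1 + (k%:R - 1) * a != 0) -> (i <= k)%N ->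
  ((Pmx m a)^T *m Umx m a *m Pmx m a) i k = if i == k then piv a k else 0.
Proof.
move=> hne hik; rewrite -mulmxA mxE.
case: eqP => [eik|nik].
  subst i. rewrite (bigD1 k) //= big1 ?addr0.
    by rewrite UP_entry !mxE eqxx mul1r /piv; ring.
  move=> j hj; rewrite mxE mxE.
  case: (ltngtP j k) => hjk.
  - by rewrite (UP_zero _ hjk) ?mulr0.
  - have -> : (j == k) = false by rewrite -val_eqE /= gtn_eqF.
    by rewrite mul0r.
  - by move: hj; rewrite -val_eqE /= hjk eqxx.
have hik' : (i < k)%N by rewrite ltn_neqAle hik andbT; apply/eqP => h; apply: nik; apply: val_inj.
rewrite big1 // => j _; rewrite mxE mxE.
case: (leqP j i) => hji.
  by rewrite (UP_zero _ (leq_ltn_trans hji hik')) ?mulr0.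
have -> : (j == i) = false by rewrite -val_eqE /= gtn_eqF.
by rewrite ltnNge (ltnW hji) /= mul0r.
Qed.

Lemma LDL (R : fieldType) m (a : R) :
  (forall k : 'I_m, 1 + (k%:R - 1) * a != 0) ->
  (Pmx m a)^T *m Umx m a *m Pmx m a = diag_mx (\row_k piv a k).
Proof.
move=> hne; apply/matrixP => i k.
rewrite [RHS]mxE [in RHS]mxE.
case: (leqP i k) => hik.
  by rewrite LDL_le //; case: eqP => // ->; rewrite mulr1n.
have sym : ((Pmx m a)^T *m Umx m a *m Pmx m a)^T = (Pmx m a)^T *m Umx m a *m Pmx m a.
  by rewrite !trmx_mul trmxK Umx_tr mulmxA.
rewrite -sym mxE LDL_le ?(ltnW hik) //.
have -> : (k == i) = false by rewrite -val_eqE /= ltn_eqF.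
by have -> : (i == k) = false by rewrite -val_eqE /= gtn_eqF.
Qed.

Lemma detP (R : fieldType) m (a : R) : \det (Pmx m a) = 1.
Proof.
rewrite -det_tr det_trig.
  by rewrite big1 // => i _; rewrite !mxE eqxx.
rewrite /is_trig_mx; apply/forallP => i; apply/forallP => j; apply/implyP => hij; rewrite !mxE.
have -> : (j == i) = false by rewrite -val_eqE /= gtn_eqF.
by rewrite ltnNge (ltnW hij).
Qed.

Definition Kc (R : realFieldType) (N : R) : R := 32 * N ^+ 2.
Definition Dc (R : realFieldType) (N : R) : R := Kc N * (N - 1) - 1.
Definition ac (R : realFieldType) (N : R) : R := - Kc N / Dc N.

Lemma Dc_gt0 (R : realFieldType) (N : R) : 2 <= N -> 0 < Dc N.
Proof. move=> h; rewrite /Dc /Kc; nra. Qed.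

Lemma ac_eq (R : realFieldType) (N : R) : 2 <= N -> ac N * Dc N = - Kc N.
Proof. move=> h; have := Dc_gt0 h => hD; rewrite /ac mulrAC -mulrA divff ?mulr1 //; lra. Qed.

Lemma a_neg (R : realFieldType) (N : R) : 2 <= N -> ac N < 0.
Proof.
move=> h; have hD := Dc_gt0 h; have e := ac_eq h.
have hK : 0 < Kc N by rewrite /Kc; nra.
nra.
Qed.

Lemma a_piv (R : realFieldType) (N : R) : 2 <= N -> 0 < 1 + (N - 2) * ac N.
Proof.
move=> h; have hD := Dc_gt0 h; have e := ac_eq h.
have hK : 2 <= Kc N by rewrite /Kc; nra.
have : (1 + (N - 2) * ac N) * Dc N = Kc N - 1 by rewrite /Dc in e *; nra.
nra.
Qed.

Lemma a_b (R : realFieldType) (N : R) : 2 <= N -> (1 + (N - 1) * ac N) * Dc N = -1.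
Proof. move=> h; have e := ac_eq h; rewrite /Dc in e *; nra. Qed.

Lemma a_bneg (R : realFieldType) (N : R) : 2 <= N -> 1 + (N - 1) * ac N < 0.
Proof. move=> h; have := a_b h; have := Dc_gt0 h; nra. Qed.

Lemma a_K (R : realFieldType) (N : R) : 2 <= N -> ac N = Kc N * (1 + (N - 1) * ac N).
Proof.
move=> h; have e1 := a_b h; have e2 := ac_eq h; have hD := Dc_gt0 h.
by apply: (mulIf (lt0r_neq0 hD)); rewrite e2 -mulrA e1 mulrN1.
Qed.

Lemma a_ge (R : realFieldType) (N : R) : 2 <= N -> -2 <= ac N.
Proof.
move=> h; have hD := Dc_gt0 h; have e := ac_eq h; rewrite /Dc /Kc in e hD *.
nra.
Qed.

Lemma a_le (R : realFieldType) (N : R) : 2 <= N -> ac N * N <= -1.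
Proof.
move=> h; have hD := Dc_gt0 h; have e := ac_eq h; rewrite /Dc /Kc in e hD *.
nra.
Qed.

Definition wf (R : realFieldType) (a mu : R) : R := (a * (1 + mu ^+ 2) - 2 * mu) / (1 - mu ^+ 2).

Lemma wf_far (R : realFieldType) (a mu T : R) : `|a| <= 2 -> 4 <= T -> T <= `|mu| ->
  `|wf a mu + a| <= 8 / T.
Proof.
move=> ha hT hm.
have hm2 : mu ^+ 2 = `|mu| ^+ 2 by rewrite real_normK ?num_real.
have hd : 0 < mu ^+ 2 - 1 by rewrite hm2; nra.
have -> : wf a mu + a = 2 * (mu - a) / (mu ^+ 2 - 1).
  rewrite /wf; field.
  by apply/andP; split; apply/eqP => h; move: hd; rewrite ?h; [|]; nra.
rewrite normrM [`|_^-1|]ger0_norm; last by rewrite invr_ge0 ltW.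
rewrite ler_pdivrMr // mulrAC ler_pdivlMr; last lra.
have h1 : `|2 * (mu - a)| <= 2 * (`|mu| + 2).
  rewrite normrM ger0_norm // ler_pM2l //; apply: (le_trans (ler_normB _ _)); lra.
have h0 : 0 <= `|2 * (mu - a)| by [].
nra.
Qed.

Lemma wfV (R : realFieldType) (a mu : R) : mu != 0 -> mu ^+ 2 != 1 ->
  wf a mu^-1 = - wf a mu.
Proof.
move=> h0 h1; rewrite /wf; field.
by rewrite subr_eq0 eq_sym h1 h0 subr_eq0 h1.
Qed.

Lemma wf_near (R : realFieldType) (a mu T : R) : `|a| <= 2 -> 4 <= T -> mu != 0 ->
  `|mu| <= T^-1 -> `|wf a mu - a| <= 8 / T.
Proof.
move=> ha hT h0 hm.
have hT0 : 0 < T by lra.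
have hmu : T <= `|mu^-1|.
  rewrite normfV -(mul1r (`|mu|^-1)) ler_pdivlMr ?normr_gt0 //.
  by rewrite -ler_pdivlMl // mulr1.
have h1 : mu ^+ 2 != 1.
  apply/eqP => e; have : `|mu| ^+ 2 = 1 by rewrite real_normK ?num_real.
  have hTi : T^-1 * T = 1 by rewrite mulVf //; lra.
  have : 0 <= `|mu| by [].
  have : 0 < T^-1 by rewrite invr_gt0.
  nra.
have := wf_far ha hT hmu.
by rewrite wfV // -normrN opprD opprK.
Qed.

Lemma wf_pair (R : realFieldType) (a e : R) : a < 0 -> 0 < e -> e <= 1 ->
  2 <= wf a (1 + e) * (3 * e).
Proof.
move=> ha he1 he2.
have hd : 1 - (1 + e) ^+ 2 = - (2 * e + e ^+ 2) by ring.
have hd0 : 0 < 2 * e + e ^+ 2 by nra.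
have hX : wf a (1 + e) * (2 * e + e ^+ 2) = 2 * (1 + e) - a * (1 + (1 + e) ^+ 2).
  rewrite /wf hd; field; lra.
have : 2 <= wf a (1 + e) * (2 * e + e ^+ 2) by rewrite hX; nra.
nra.
Qed.

Lemma sum_g (R : realFieldType) n (a : R) (p : 'I_n) (F : 'I_n -> R) :
  \sum_q (if p == q then 1 else a) * F q = (1 - a) * F p + a * \sum_q F q.
Proof.
have -> : \sum_q (if p == q then 1 else a) * F q =
   \sum_q ((1 - a) * ((if p == q then 1 else 0) * F q) + a * F q).
  apply: eq_bigr => l _; case: eqP => _; ring.
by rewrite big_split /= -!mulr_sumr sum_delta.
Qed.

Definition Ginv (R : realFieldType) n (a K : R) : 'M[R]_n :=
  \matrix_(q, r) ((1 - a)^-1 * ((if q == r then 1 else 0) - K)).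

Lemma G_Ginv (R : realFieldType) n (a K : R) : a != 1 ->
  a = K * (1 + (n%:R - 1) * a) -> Umx n a *m Ginv n a K = 1%:M.
Proof.
move=> ha hK; apply/matrixP => i j; rewrite mxE.
have -> : \sum_l Umx n a i l * Ginv n a K l j =
   \sum_l (if i == l then 1 else a) * Ginv n a K l j by apply: eq_bigr => l _; rewrite mxE.
rewrite sum_g.
have -> : \sum_l Ginv n a K l j = (1 - a)^-1 * (1 - K * n%:R).
  rewrite (eq_bigr (fun l => (1-a)^-1 * ((if l == j then 1 else 0) - K))) => [|l _]; last by rewrite mxE.
  rewrite -mulr_sumr; congr (_ * _).
  rewrite sumrB sumr_const card_ord.
  have -> : \sum_(i0 < n) (if i0 == j then 1 else 0) = 1 :> R.
    rewrite (bigD1 j) //= eqxx big1 ?addr0 // => l hl; by rewrite (negbTE hl).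
  by rewrite mulr_natr.
have ha' : 1 - a != 0 by rewrite subr_eq0 eq_sym.
rewrite !mxE.
set d := (if i == j then 1 else 0).
have -> : (1 - a) * ((1 - a)^-1 * (d - K)) +
     a * ((1 - a)^-1 * (1 - K * n%:R)) =
   d + (1 - a)^-1 * (a - K * (1 + (n%:R - 1) * a)).
  by field.
by rewrite -hK subrr mulr0 addr0 /d; case: eqP.
Qed.

Lemma invG (R : realFieldType) n (a K : R) : a != 1 ->
  a = K * (1 + (n%:R - 1) * a) -> invmx (Umx n a) = Ginv n a K.
Proof.
move=> ha hK; have e := G_Ginv ha hK.
have [u _] := mulmx1_unit e.
by rewrite -[invmx _]mulmx1 -e mulKmx.
Qed.

Lemma quad_Ginv (R : realFieldType) n (a K : R) (h : 'I_n -> R) :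
  \sum_q \sum_r Ginv n a K q r * h q * h r =
  (1 - a)^-1 * (\sum_q h q ^+ 2 - K * (\sum_q h q) ^+ 2).
Proof.
have -> : \sum_q \sum_r Ginv n a K q r * h q * h r =
    \sum_q ((1 - a)^-1 * h q * h q - (1 - a)^-1 * K * h q * \sum_r h r).
  apply: eq_bigr => q _.
  have -> : \sum_r Ginv n a K q r * h q * h r =
     \sum_r ((1 - a)^-1 * h q * ((if q == r then 1 else 0) * h r) - (1 - a)^-1 * K * h q * h r).
    by apply: eq_bigr => r _; rewrite mxE; case: eqP => _; ring.
  by rewrite sumrB -!mulr_sumr sum_delta.
rewrite sumrB -!mulr_suml.
have -> : \sum_q (1 - a)^-1 * h q * h q = (1 - a)^-1 * \sum_q h q ^+ 2.
  by rewrite mulr_sumr; apply: eq_bigr => q _; ring.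
have -> : \sum_q (1 - a)^-1 * K * h q = (1 - a)^-1 * K * \sum_q h q by rewrite mulr_sumr.
ring.
Qed.

Lemma sum_split1 (R : realFieldType) n (h g : 'I_n -> R) :
  \sum_q h q = \sum_q g q + \sum_q (h q - g q).
Proof. by rewrite sumrB addrC subrK. Qed.

Lemma sum_split2 (R : realFieldType) n (h g : 'I_n -> R) :
  \sum_q h q ^+ 2 = \sum_q g q * g q + 2 * \sum_q g q * (h q - g q) + \sum_q (h q - g q) ^+ 2.
Proof.
rewrite mulr_sumr -!big_split; apply: eq_bigr => q _ /=.
by move: (h q) (g q) => x y; ring.
Qed.

Lemma reduce (R : realFieldType) n (a K : R) (p : 'I_n) (h : 'I_n -> R) :
  h p = 1 -> a = K * (1 + (n%:R - 1) * a) ->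
  \sum_q h q ^+ 2 - K * (\sum_q h q) ^+ 2 =
  1 - a + \sum_q (h q - (if p == q then 1 else a)) ^+ 2
        - K * (\sum_q (h q - (if p == q then 1 else a))) ^+ 2.
Proof.
move=> hp hK.
rewrite (sum_split2 h (fun q => if p == q then 1 else a)).
rewrite (sum_split1 h (fun q => if p == q then 1 else a)).
rewrite !sum_g eqxx hp subrr mulr0 add0r.
have e3 : \sum_q (if p == q then 1 else a) = (1 - a) + a * n%:R :> R.
  have := sum_g a p (fun _ => 1); rewrite sumr_const card_ord.
  under eq_bigr do rewrite mulr1. by move=> ->; rewrite mulr1 mulr_natr.
rewrite e3.
set S := \sum_q _; set Q := \sum_q _.
have -> : (1 - a) * 1 + a * (1 - a + a * n%:R) + 2 * (a * S) + Q -
    K * (1 - a + a * n%:R + S) ^+ 2 =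
    (1 - a + Q - K * S ^+ 2) + (a - K * (1 + (n%:R - 1) * a)) * ((1 + (n%:R - 1) * a) + 2 * S).
  by ring.
by rewrite -hK subrr mul0r addr0.
Qed.

Definition m0 (n : nat) : nat := (n.-1 %/ 2)%N.
Definition rk (n p : nat) : nat := if (p <= m0 n)%N then p else p.-1.
Definition tt (R : realFieldType) (N : R) : R := 32 * N ^+ 2.
Definition eps (R : realFieldType) (N : R) : R := (40 * N)^-1.
Definition fct (R : realFieldType) (n : nat) (p : nat) : R :=
  if p == (m0 n).+1 then 1 + eps (n%:R : R) else 1.
Definition lam (R : realFieldType) (n : nat) (p : 'I_n) : R :=
  tt (n%:R : R) ^+ rk n p * fct R n p.

Lemma eps_facts (R : realFieldType) (N : R) : 2 <= N -> 0 < eps N /\ eps N <= 1 /\ eps N * (40 * N) = 1.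
Proof.
move=> h; rewrite /eps.
have h0 : 0 < 40 * N by lra.
split; first by rewrite invr_gt0.
split; last by rewrite mulVf //; lra.
rewrite invf_le1 //; lra.
Qed.

Lemma fct_bounds (R : realFieldType) n p : (2 <= n)%N -> 1 <= fct R n p /\ fct R n p <= 2.
Proof.
move=> hn; have hN : 2 <= n%:R :> R by rewrite (ler_nat R 2 n).
have [e0 [e1 _]] := eps_facts hN.
rewrite /fct; case: eqP => _; lra.
Qed.

Lemma lam_pos (R : realFieldType) n (p : 'I_n) : (2 <= n)%N -> 0 < lam R p.
Proof.
move=> hn; have [f1 _] := @fct_bounds R n p hn.
have hN : 2 <= n%:R :> R by rewrite (ler_nat R 2 n).
rewrite /lam; apply: mulr_gt0; last lra.
by apply: exprn_gt0; rewrite /tt; nra.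
Qed.

Lemma ratio_up (R : realFieldType) n (p q : 'I_n) : (2 <= n)%N ->
  (rk n p < rk n q)%N -> 16 * (n%:R : R) ^+ 2 <= lam R q / lam R p.
Proof.
move=> hn hr.
have hN : 2 <= n%:R :> R by rewrite (ler_nat R 2 n).
have hp := @lam_pos R n p hn.
rewrite ler_pdivlMr //.
have [fp1 fp2] := @fct_bounds R n p hn; have [fq1 fq2] := @fct_bounds R n q hn.
rewrite /lam -(subnKC (ltnW hr)) exprD.
have ht : 1 <= tt (n%:R : R) by rewrite /tt; nra.
have htk : tt (n%:R : R) <= tt (n%:R : R) ^+ (rk n q - rk n p) by apply: ler_eXnr; rewrite // subn_gt0.
have hx : 0 < tt (n%:R : R) ^+ rk n p by apply: exprn_gt0; lra.
have e : 16 * (n%:R:R) ^+ 2 * 2 = tt (n%:R : R) by rewrite /tt; ring.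
move: ht htk hx e; set t := tt _; set X := t ^+ rk n p; set Y := t ^+ (rk n q - rk n p).
clearbody t X Y => ht htk hx e.
have hN2 : 0 < 16 * (n%:R:R) ^+ 2 by nra.
have s1 : 16 * (n%:R:R) ^+ 2 * (X * fct R n p) <= 16 * (n%:R:R) ^+ 2 * (X * 2).
  by rewrite (ler_pM2l hN2) (ler_pM2l hx).
have s2 : X * t <= X * Y * fct R n q.
  rewrite -mulrA (ler_pM2l hx).
  have hY : 0 <= Y by lra.
  have hf : 0 <= fct R n q - 1 by lra.
  have := mulr_ge0 hY hf; lra.
nra.
Qed.

Lemma rk_lt n (p q : nat) : (p < q)%N -> ~~ ((p == m0 n) && (q == (m0 n).+1)) ->
  (rk n p < rk n q)%N.
Proof.
rewrite /rk; move: (m0 n) => m h1 h2.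
case: ifP; case: ifP; move: h2; case: eqP; case: eqP; lia.
Qed.

Lemma m0_lt n : (2 <= n)%N -> ((m0 n).+1 < n)%N.
Proof. rewrite /m0; lia. Qed.

Lemma ratio_down (R : realFieldType) n (p q : 'I_n) : (2 <= n)%N ->
  (rk n q < rk n p)%N -> lam R q / lam R p <= (16 * (n%:R : R) ^+ 2)^-1.
Proof.
move=> hn hr.
have hN : 2 <= n%:R :> R by rewrite (ler_nat R 2 n).
have h := @ratio_up R n q p hn hr.
have hp := @lam_pos R n p hn; have hq := @lam_pos R n q hn.
rewrite -invf_div lef_pV2 ?posrE //; first by apply: divr_gt0.
nra.
Qed.

Lemma ratio_pair (R : realFieldType) n (p q : 'I_n) : (2 <= n)%N ->
  (p : nat) = m0 n -> (q : nat) = (m0 n).+1 -> lam R q / lam R p = 1 + eps (n%:R : R).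
Proof.
move=> hn ep eq.
have hN : 2 <= n%:R :> R by rewrite (ler_nat R 2 n).
rewrite /lam /rk /fct ep eq leqnn ltnn /= eqxx.
have -> : (m0 n == (m0 n).+1) = false by rewrite (ltn_eqF (ltnSn _)).
have : 0 < tt (n%:R : R) ^+ m0 n by apply: exprn_gt0; rewrite /tt; nra.
move: (tt _ ^+ _) (eps _) => x e hx; by rewrite mulr1 mulrAC divff ?mul1r // (gt_eqF hx).
Qed.

Lemma lam_lt (R : realFieldType) n (p q : 'I_n) : (2 <= n)%N ->
  (p < q)%N -> lam R p < lam R q.
Proof.
move=> hn hpq.
have hN : 2 <= n%:R :> R by rewrite (ler_nat R 2 n).
have hp := @lam_pos R n p hn; have hq := @lam_pos R n q hn.
have [e0 _] := eps_facts hN.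
suff : 1 < lam R q / lam R p by rewrite ltr_pdivlMr // mul1r.
case: (boolP ((p == m0 n :> nat) && (q == (m0 n).+1 :> nat))) => [/andP [/eqP a1 /eqP a2]|hh].
  rewrite (@ratio_pair R n p q hn a1 a2); lra.
have := @ratio_up R n p q hn (rk_lt hpq hh); nra.
Qed.

Lemma sum_abs_le (R : realFieldType) n (F : 'I_n -> R) c :
  (forall q, `|F q| <= c) -> `|\sum_q F q| <= n%:R * c.
Proof.
move=> h; apply: (le_trans (ler_norm_sum _ _ _)).
apply: (le_trans (ler_sum _ (fun q _ => h q))).
by rewrite sumr_const card_ord mulr_natl.
Qed.

Lemma sum_sq_le (R : realFieldType) n (F : 'I_n -> R) c :
  (forall q, F q ^+ 2 <= c) -> \sum_q F q ^+ 2 <= n%:R * c.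
Proof.
move=> h; apply: (le_trans (ler_sum _ (fun q _ => h q))).
by rewrite sumr_const card_ord mulr_natl.
Qed.

Lemma row_nonpair (R : realFieldType) n (W : 'I_n -> R) (p : 'I_n) (a eta : R) :
  (forall q : 'I_n, (p < q)%N -> `|W q + a| <= eta) ->
  (forall q : 'I_n, (q < p)%N -> `|W q - a| <= eta) -> W p = 0 -> 0 <= eta ->
  1 <= `|n%:R - 1 - 2 * (p%:R : R)| -> n%:R * eta <= `|a| / 2 -> eta <= `|a| ->
  `|a| / 2 <= `|\sum_q W q| /\ \sum_q W q ^+ 2 <= n%:R * (4 * a ^+ 2).
Proof.
move=> hup hdn hp he hd hne hea.
pose s := fun q : 'I_n => (if (p < q)%N then - a else 0) + (if (q < p)%N then a else 0).
have hs : forall q, `|W q - s q| <= eta.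
  move=> q; rewrite /s; case: (ltngtP p q) => h.
  - by rewrite addr0 opprK; apply: hup.
  - by rewrite add0r; apply: hdn.
  - have -> : q = p by apply: val_inj.
    by rewrite hp addr0 subr0 normr0.
have hsa : forall q, `|s q| <= `|a|.
  move=> q; rewrite /s; case: (ltngtP p q) => h.
  - by rewrite addr0 normrN.
  - by rewrite add0r.
  - by rewrite addr0 normr0.
have hS : \sum_q s q = - a * (n%:R - 1 - 2 * p%:R).
  rewrite /s big_split /=.
  have -> : \sum_(q : 'I_n) (if (p < q)%N then - a else 0) =
     \sum_(q : 'I_n) (- a) - \sum_(q : 'I_n) (if (q < p.+1)%N then - a else 0).
    rewrite -sumrB; apply: eq_bigr => q _; rewrite ltnS.
    by case: leqP => _; rewrite ?subrr ?subr0.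
  rewrite (sum_lt _ (ltn_ord p)) (sum_lt _ (ltnW (ltn_ord p))) sumr_const card_ord.
  rewrite -(mulr_natr (-a) n) -(mulr_natr (-a) p.+1) -addn1 -(mulr_natr a p) (natrD R p 1).
  move: (n%:R) (p%:R) => x y; ring.
have hdiff : `|\sum_q W q - \sum_q s q| <= n%:R * eta.
  rewrite -sumrB; exact: sum_abs_le.
have hSa : `|a| <= `|\sum_q s q|.
  rewrite hS normrM normrN -{1}(mulr1 `|a|); apply: ler_wpM2l => //.
split.
  have := ler_normD (\sum_q s q - \sum_q W q) (\sum_q W q); rewrite subrK distrC.
  lra.
apply: sum_sq_le => q.
have h1 : `|W q| <= 2 * `|a|.
  have := ler_normD (W q - s q) (s q); rewrite subrK => hh.
  have := hs q; have := hsa q; lra.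
have e1 : W q ^+ 2 = `|W q| ^+ 2 by rewrite real_normK ?num_real.
have e2 : a ^+ 2 = `|a| ^+ 2 by rewrite real_normK ?num_real.
rewrite e1 e2; have : 0 <= `|W q| by [].
move: h1; move: (`|W q|) (`|a|) => x y; nra.
Qed.

Lemma sum_le_c (R : realFieldType) n (F : 'I_n -> R) c :
  (forall q, F q <= c) -> \sum_q F q <= n%:R * c.
Proof.
move=> h; apply: (le_trans (ler_sum _ (fun q _ => h q))).
by rewrite sumr_const card_ord mulr_natl.
Qed.

Lemma row_pair (R : realFieldType) n (W : 'I_n -> R) (qs : 'I_n) (M : R) :
  (forall q, q != qs -> `|W q| <= 3) -> `|W qs| = M ->
  M - 3 * n%:R <= `|\sum_q W q| /\ \sum_q W q ^+ 2 <= M ^+ 2 + 9 * n%:R.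
Proof.
move=> hb hM.
rewrite (bigD1 qs) //= [X in _ /\ X <= _](bigD1 qs) //= !big_mkcond /=.
have h1 : `|\sum_q (if q != qs then W q else 0)| <= n%:R * 3.
  apply: sum_abs_le => q; case: ifP => h; [exact: hb|by rewrite normr0].
have h2 : \sum_q (if q != qs then W q ^+ 2 else 0) <= n%:R * 9.
  apply: sum_le_c => q.
  case: ifP => h; last by [].
  have := hb q h; have : 0 <= `|W q| by [].
  rewrite -real_normK ?num_real //; move: (`|W q|) => x; nra.
have e : W qs ^+ 2 = M ^+ 2 by rewrite -hM real_normK ?num_real.
split; last by rewrite e big_mkcond /=; lra.
have := ler_normD (W qs + \sum_q (if q != qs then W q else 0)) (- \sum_q (if q != qs then W q else 0)).
rewrite addrK normrN hM; lra.
Qed.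

Lemma Hw_alg (R : realFieldType) (a x y : R) : x != 0 -> x ^+ 2 != y ^+ 2 ->
  2 * x * (x * a - y) / (x ^+ 2 - y ^+ 2) - a = wf a (y / x).
Proof.
move=> hx hxy; rewrite /wf.
have h1 : x ^+ 2 - y ^+ 2 != 0 by rewrite subr_eq0.
field; by rewrite hx h1.
Qed.

Lemma final_nonpair (R : realFieldType) (a N s Q : R) : 2 <= N -> -2 <= a -> a * N <= -1 ->
  `|a| / 2 <= `|s| -> Q <= N * (4 * a ^+ 2) -> 1 - a + Q - 32 * N ^+ 2 * s ^+ 2 < 0.
Proof.
move=> hN ha haN hs hQ.
have an : a < 0 by nra.
have ea : `|a| = - a by rewrite ltr0_norm.
have es : s ^+ 2 = `|s| ^+ 2 by rewrite real_normK ?num_real.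
have hs0 : 0 <= `|s| by [].
rewrite ea in hs.
have hs2 : a ^+ 2 / 4 <= `|s| ^+ 2 by nra.
have h1 : 1 <= (a * N) ^+ 2 by nra.
have h2 : 2 * (N * (4 * a ^+ 2)) <= 4 * (a * N) ^+ 2 by nra.
have h3 : 8 * (a * N) ^+ 2 <= 32 * N ^+ 2 * s ^+ 2.
  rewrite es; have : 0 <= N ^+ 2 by nra. nra.
nra.
Qed.

Lemma final_pair (R : realFieldType) (a N s Q M : R) : 2 <= N -> -2 <= a -> a < 0 ->
  20 * N <= M -> M - 3 * N <= `|s| -> Q <= M ^+ 2 + 9 * N -> 1 - a + Q - 32 * N ^+ 2 * s ^+ 2 < 0.
Proof.
move=> hN ha an hM hs hQ.
have es : s ^+ 2 = `|s| ^+ 2 by rewrite real_normK ?num_real.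
have hs2 : (M - 3 * N) ^+ 2 <= `|s| ^+ 2 by nra.
have h3 : 2 * (M - 3 * N) ^+ 2 <= 32 * N ^+ 2 * s ^+ 2.
  rewrite es; have h0 : 0 <= `|s| ^+ 2 by nra.
  have hk : 0 <= 32 * N ^+ 2 - 2 by nra.
  have := mulr_ge0 hk h0; nra.
nra.
Qed.

Lemma piv_eq (R : realFieldType) (a : R) k : 1 + (k%:R - 1) * a != 0 ->
  piv a k = (1 - a) * (1 + k%:R * a) / (1 + (k%:R - 1) * a).
Proof. rewrite /piv /bet; move: (k%:R) => x h; by field. Qed.

Lemma piv_pos (R : realFieldType) (a : R) k : 0 < 1 - a -> 0 < 1 + k%:R * a ->
  0 < 1 + (k%:R - 1) * a -> 0 < piv a k.
Proof.
move=> h1 h2 h3; rewrite piv_eq ?gt_eqF //.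
by apply: divr_gt0 => //; apply: mulr_gt0.
Qed.

Lemma piv_neg (R : realFieldType) (a : R) k : 0 < 1 - a -> 1 + k%:R * a < 0 ->
  0 < 1 + (k%:R - 1) * a -> piv a k < 0.
Proof.
move=> h1 h2 h3; rewrite piv_eq ?gt_eqF //.
rewrite pmulr_llt0 ?invr_gt0 //.
by rewrite pmulr_rlt0.
Qed.

Lemma det_Umx (R : realFieldType) m (a : R) :
  (forall k : 'I_m, 1 + (k%:R - 1) * a != 0) -> \det (Umx m a) = \prod_(k < m) piv a k.
Proof.
move=> hne; have := congr1 determinant (LDL hne).
rewrite !det_mulmx det_tr detP mul1r mulr1 det_diag => ->.
by apply: eq_bigr => k _; rewrite mxE.
Qed.

Lemma quad_row (R : realFieldType) n (A B : 'M[R]_n) i :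
  (row i A *m B *m (row i A)^T) 0 0 = (A *m B *m A^T) i i.
Proof.
rewrite !mxE; apply: eq_bigr => k _; rewrite !mxE; congr (_ * _).
by apply: eq_bigr => l _; rewrite !mxE.
Qed.

Lemma submx_U (R : realFieldType) n (a : R) (S : {set 'I_n}) :
  principal_submx (Umx n a) S = Umx #|S| a.
Proof. by apply/matrixP => i j; rewrite !mxE (inj_eq enum_val_inj). Qed.

Lemma W_entry (R : realFieldType) n (a : R) (p q : 'I_n) : (2 <= n)%N -> p != q ->
  Hmx (@lam R n) (Umx n a) p q - (if p == q then 1 else a) = wf a (lam R q / lam R p).
Proof.
move=> hn hpq.
have hp := @lam_pos R n p hn; have hq := @lam_pos R n q hn.
rewrite !mxE (negbTE hpq); apply: Hw_alg; first exact: lt0r_neq0.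
apply/eqP => e.
have : lam R p = lam R q.
  move/eqP: e; rewrite eqf_sqr => /orP [/eqP //|/eqP h].
  by move: hp; rewrite h oppr_gt0 => hq'; move: hq; rewrite ltNge (ltW hq').
move=> ee; move: hpq; case: (ltngtP p q) => h.
- by have := @lam_lt R n p q hn h; rewrite ee ltxx.
- by have := @lam_lt R n q p hn h; rewrite ee ltxx.
- by move=> /eqP; apply; apply: val_inj.
Qed.

Lemma W_up (R : realFieldType) n (a : R) (p q : 'I_n) : (2 <= n)%N -> -2 <= a -> a < 0 ->
  (rk n p < rk n q)%N ->
  `|Hmx (@lam R n) (Umx n a) p q - (if p == q then 1 else a) + a| <= 8 / (16 * (n%:R : R) ^+ 2).
Proof.
move=> hn age an hr.
have hN : 2 <= n%:R :> R by rewrite (ler_nat R 2 n).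
have hpq : p != q by apply/eqP => e; move: hr; rewrite e ltnn.
rewrite W_entry //; apply: wf_far.
- rewrite ler0_norm; lra.
- nra.
- have h := @ratio_up R n p q hn hr.
  rewrite ger0_norm //; apply: divr_ge0; apply: ltW; exact: lam_pos.
Qed.

Lemma W_dn (R : realFieldType) n (a : R) (p q : 'I_n) : (2 <= n)%N -> -2 <= a -> a < 0 ->
  (rk n q < rk n p)%N ->
  `|Hmx (@lam R n) (Umx n a) p q - (if p == q then 1 else a) - a| <= 8 / (16 * (n%:R : R) ^+ 2).
Proof.
move=> hn age an hr.
have hN : 2 <= n%:R :> R by rewrite (ler_nat R 2 n).
have hpq : p != q by apply/eqP => e; move: hr; rewrite e ltnn.
have hp := @lam_pos R n p hn; have hq := @lam_pos R n q hn.
rewrite W_entry //; apply: wf_near.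
- rewrite ler0_norm; lra.
- nra.
- by apply: lt0r_neq0; apply: divr_gt0.
- rewrite ger0_norm; last by apply: ltW; apply: divr_gt0.
  exact: (@ratio_down R n p q hn hr).
Qed.

Lemma W_le3 (R : realFieldType) n (a : R) (p q : 'I_n) : (2 <= n)%N -> -2 <= a -> a < 0 ->
  (rk n p < rk n q)%N \/ (rk n q < rk n p)%N ->
  `|Hmx (@lam R n) (Umx n a) p q - (if p == q then 1 else a)| <= 3.
Proof.
move=> hn age an hr.
have hN : 2 <= n%:R :> R by rewrite (ler_nat R 2 n).
have he : 8 / (16 * (n%:R : R) ^+ 2) <= 1.
  rewrite ler_pdivrMr; last by nra. nra.
set x := _ - _.
case: hr => hr.
  have := W_up (R := R) hn age an hr; rewrite -/x => h.
  have := ler_normD (x + a) (- a); rewrite addrK normrN (ler0_norm (ltW an)).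
  lra.
have := W_dn (R := R) hn age an hr; rewrite -/x => h.
have := ler_normD (x - a) a; rewrite subrK (ler0_norm (ltW an)).
lra.
Qed.

Lemma Wp0 (R : realFieldType) n (a : R) (p : 'I_n) :
  Hmx (@lam R n) (Umx n a) p p - (if p == p then 1 else a) = 0.
Proof. by rewrite !mxE !eqxx subrr. Qed.

Lemma row_cond (R : realFieldType) n (a : R) (p : 'I_n) : (2 <= n)%N -> -2 <= a -> a < 0 ->
  a * n%:R <= -1 ->
  1 - a + \sum_q (Hmx (@lam R n) (Umx n a) p q - (if p == q then 1 else a)) ^+ 2
   - 32 * (n%:R : R) ^+ 2 * (\sum_q (Hmx (@lam R n) (Umx n a) p q - (if p == q then 1 else a))) ^+ 2 < 0.
Proof.
move=> hn age an ale.
have hN : 2 <= n%:R :> R by rewrite (ler_nat R 2 n).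
have [e0 [e1 e2]] := eps_facts hN.
set W := fun q => Hmx (@lam R n) (Umx n a) p q - (if p == q then 1 else a).
have hM : 20 * n%:R <= wf a (1 + eps (n%:R : R)).
  have := wf_pair an e0 e1; move: (wf _ _) e2 => M e2 hM.
  have h40 : 0 <= 40 * (n%:R : R) by lra.
  have := ler_wpM2r h40 hM.
  have -> : M * (3 * eps (n%:R : R)) * (40 * n%:R) = 3 * M * (eps (n%:R : R) * (40 * n%:R)) by ring.
  rewrite e2; lra.
have hM0 : 0 <= wf a (1 + eps (n%:R : R)) by nra.
have m0n := m0_lt hn.
case: (boolP ((p : nat) == m0 n)) => hp1.
  pose qs : 'I_n := Ordinal m0n.
  have hb : forall q, q != qs -> `|W q| <= 3.
    move=> q hq; case: (eqVneq p q) => [<-|hpq]; rewrite /W /=.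
      by rewrite !mxE eqxx subrr normr0.
    apply: W_le3 => //.
    case: (ltngtP p q) => h.
    + left; apply: rk_lt => //; apply/negP => /andP [_ /eqP h2].
      by case/eqP: hq; apply: val_inj.
    + right; apply: rk_lt => //; apply/negP => /andP [_ /eqP h2].
      by move/eqP: hp1; rewrite h2; lia.
    + by case/eqP: hpq; apply: val_inj.
  have hMq : `|W qs| = wf a (1 + eps (n%:R : R)).
    rewrite /W W_entry //; last first.
      by apply/eqP => e; move/eqP: hp1; rewrite e /=; lia.
    rewrite (@ratio_pair R n p qs hn) //; last by apply/eqP.
    by rewrite ger0_norm.
  have [s1 s2] := @row_pair R n W qs _ hb hMq.
  exact: final_pair hN age an hM s1 s2.
case: (boolP ((p : nat) == (m0 n).+1)) => hp2.
  pose qs : 'I_n := Ordinal (ltnW m0n).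
  have hb : forall q, q != qs -> `|W q| <= 3.
    move=> q hq; case: (eqVneq p q) => [<-|hpq]; rewrite /W /=.
      by rewrite !mxE eqxx subrr normr0.
    apply: W_le3 => //.
    case: (ltngtP p q) => h.
    + left; apply: rk_lt => //; apply/negP => /andP [/eqP h2 _].
      by rewrite h2 eqxx in hp1.
    + right; apply: rk_lt => //; apply/negP => /andP [/eqP h2 _].
      by case/eqP: hq; apply: val_inj.
    + by case/eqP: hpq; apply: val_inj.
  have hMq : `|W qs| = wf a (1 + eps (n%:R : R)).
    have hqp : p != qs.
      by apply/eqP => e; move/negP: hp1; rewrite e.
    rewrite /W W_entry //.
    have hr := @ratio_pair R n qs p hn erefl (eqP hp2).
    have hp := @lam_pos R n p hn; have hq := @lam_pos R n qs hn.
    have -> : lam R qs / lam R p = (lam R p / lam R qs)^-1 by rewrite invf_div.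
    rewrite hr wfV ?normrN ?ger0_norm //.
      by apply/lt0r_neq0; lra.
    apply/eqP => e; have : (1 + eps (n%:R : R)) ^+ 2 > 1 by nra.
    by rewrite e ltxx.
  have [s1 s2] := @row_pair R n W qs _ hb hMq.
  exact: final_pair hN age an hM s1 s2.
set eta := 8 / (16 * (n%:R : R) ^+ 2).
have hN0 : 0 < 16 * (n%:R : R) ^+ 2 by nra.
have heta0 : 0 <= eta by rewrite /eta divr_ge0 // ltW.
have ea : `|a| = - a by rewrite ltr0_norm.
have hne : n%:R * eta <= `|a| / 2.
  have -> : n%:R * eta = (2 * n%:R)^-1.
    rewrite /eta; move: (n%:R : R) hN => x hx; field; lra.
  rewrite ea -[X in X <= _]mul1r ler_pdivrMr; last lra.
  nra.
have hea : eta <= `|a|.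
  have : eta <= n%:R * eta by nra.
  have : 0 <= `|a| by [].
  lra.
have hup : forall q : 'I_n, (p < q)%N -> `|W q + a| <= eta.
  move=> q hq; rewrite /W; apply: W_up => //; apply: rk_lt => //.
  by apply/negP => /andP [hh _]; move/negP: hp1.
have hdn : forall q : 'I_n, (q < p)%N -> `|W q - a| <= eta.
  move=> q hq; rewrite /W; apply: W_dn => //; apply: rk_lt => //.
  by apply/negP => /andP [_ hh]; move/negP: hp2.
have hWp : W p = 0 by rewrite /W !mxE eqxx subrr.
have hD : 1 <= `|n%:R - 1 - 2 * (p%:R : R)|.
  have : (2 * p + 3 <= n)%N \/ (n + 1 <= 2 * p)%N.
    move: hp1 hp2; rewrite /m0; move: (ltn_ord p) => hpn; lia.
  case=> h.
    have : (2 * p + 3)%:R <= n%:R :> R by rewrite ler_nat.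
    rewrite natrD natrM => h'.
    rewrite ger0_norm; lra.
  have : (n + 1)%:R <= (2 * p)%:R :> R by rewrite ler_nat.
  rewrite natrD natrM => h'.
  rewrite ler0_norm; lra.
have [s1 s2] := @row_nonpair R n W p a eta hup hdn hWp heta0 hD hne hea.
exact: final_nonpair hN age ale s1 s2.
Qed.

Lemma nat_L1 (i n : nat) : (i < n)%N -> (i < n.-1)%N \/ i = n.-1.
Proof. lia. Qed.
Lemma nat_L2 (n : nat) : (2 <= n)%N -> (0 < n.-1)%N.
Proof. lia. Qed.

Theorem mainTheorem4 (R : realType) (n : nat) (hn : (2 <= n)%N) :
  exists (lam : 'I_n -> R) (G : 'M[R]_n), in_Theta lam G.
Proof.
have hN : 2 <= n%:R :> R by rewrite (ler_nat R 2 n).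
move: (ac (n%:R : R)) (a_neg hN) (a_piv hN) (a_bneg hN) (a_K hN) (a_ge hN) (a_le hN) =>
  a an apiv abn aK age ale.
have a1 : 0 < 1 - a by lra.
have e0 : (0 < n)%N by lia.
have eN1 : (n.-1)%:R = n%:R - 1 :> R by rewrite -subn1 natrB.
have hden : forall k : nat, (k <= n.-1)%N -> 0 < 1 + (k%:R - 1) * a.
  move=> k hk; have : k%:R <= n%:R - 1 :> R.
    by rewrite -eN1 ler_nat.
  move=> hk'; nra.
have hden' : forall m (k : 'I_m), (m <= n)%N -> 1 + (k%:R - 1) * a != 0.
  move=> m k hm; rewrite gt_eqF // hden //; have := ltn_ord k; lia.
have hpivp : forall k : nat, (k < n.-1)%N -> 0 < piv a k.
  move=> k hk; apply: piv_pos => //; last by apply: hden; lia.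
  have : k%:R <= n%:R - 2 :> R.
    have hk2 : (k <= n - 2)%N by lia.
    by rewrite -(natrB R hn) ler_nat.
  move=> hk'; nra.
have hpivn : piv a n.-1 < 0.
  apply: piv_neg => //.
    by rewrite eN1.
  rewrite eN1; nra.
have el : (n.-1 < n)%N by lia.
set i0 : 'I_n := Ordinal e0.
set il : 'I_n := Ordinal el.
have LD := LDL (hden' n ^~ (leqnn n)).
have Punit : Pmx n a \in unitmx by rewrite unitmxE detP unitr1.
have Gunit : Umx n a \in unitmx.
  have ha1 : a != 1 by rewrite lt_eqF // (lt_trans an) // ltr01.
  by have [] := mulmx1_unit (G_Ginv ha1 aK).
have ha1 : a != 1 by rewrite lt_eqF // (lt_trans an) // ltr01.
exists (@lam R n), (Umx n a).
split; first by move=> p; apply: lt0r_neq0; apply: lam_pos.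
split.
  move=> p q hpq.
  have hp := @lam_pos R n p hn; have hq := @lam_pos R n q hn.
  split; last by apply/eqP => e; move: hp; rewrite e oppr_gt0 => h'; move: hq; rewrite ltNge (ltW h').
  case: (ltngtP p q) => h.
  - by rewrite lt_eqF // lam_lt.
  - by rewrite gt_eqF // lam_lt.
  - by case/eqP: hpq; apply: val_inj.
split; first exact: Umx_tr.
split; first by move=> p; rewrite mxE eqxx.
split.
  split; first by have := Gunit; rewrite unitmxE unitfE.
  split.
    split.
      exists (row i0 (Pmx n a)^T); rewrite quad_row trmxK LD !mxE eqxx mulr1n.
      by apply: hpivp; apply: nat_L2.
    exists (row il (Pmx n a)^T); rewrite quad_row trmxK LD !mxE eqxx mulr1n.
    exact: hpivn.
  split.
    exists (Pmx n a), (\row_k piv a k); split; first exact: Punit.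
    split; first exact: LD.
    have -> : [set i | (\row_k piv a k) 0 i < 0] = [set il].
      apply/setP => i; rewrite !inE mxE.
      have := nat_L1 (ltn_ord i).
      case=> h.
        rewrite lt_gtF ?hpivp //; apply/esym/negbTE; apply/eqP => e.
        by move: h; rewrite e /= ltnn.
      have -> : i = il by apply: val_inj.
      by rewrite eqxx /= hpivn.
    by rewrite cards1.
  move=> S hS; rewrite /principal_minor submx_U det_Umx.
    apply: prodr_gt0 => k _; apply: hpivp.
    by move: hS => /andP [_ h2]; apply: leq_trans (ltn_ord k) h2.
  move=> k; apply: hden'; rewrite -[X in (_ <= X)%N](card_ord n); exact: max_card.
move=> p.
rewrite (invG ha1 aK) quad_Ginv.
rewrite pmulr_rlt0 ?invr_gt0 //.
have E := @reduce R n a (Kc (n%:R : R)) p (fun q => Hmx (@lam R n) (Umx n a) p q).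
rewrite /= in E; rewrite E //.
- rewrite /Kc; exact: row_cond.
- by rewrite mxE eqxx.
Qed.
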